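(* For all positive integers $a,b,c,d$ and every positive integer $t$, $$i((a,b,c,d),t)+i((b,a,d,c),t)=F(a+c,b+d,0,t)+F(a,b,0,t)\,F(c,d,0,t).$$
   Context: For $S,T\subseteq[n]$, write $T\le S$ if $|T|=|S|$ and the $i$-th smallest element of $T$ is at most the $i$-th smallest element of $S$ for each $i$. The Schubert matroid $\mathrm{SM}_n(S)$ is the matroid on $[n]$ with bases $\{T\subseteq[n]:T\le S\}$; $i(M,t)$ is the number of lattice points in the $t$-th dilate of the matroid polytope $\mathrm{conv}\{\sum_{b\in B}e_b: B\text{ a basis of }M\}$. For a sequence $r=(r_1,\dots,r_{2m})$ of integers with $r_1\ge0$, $r_i>0$ for $i\ge2$, let $n=\sum r_i$ and let $S\subseteq[n]$ have indicator vector $(0^{r_1},1^{r_2},\dots,0^{r_{2m-1}},1^{r_{2m}})$ ($x^p$ = $p$ consecutive copies of $x$); $i(r,t):=i(\mathrm{SM}_n(S),t)$. For integers $a,b\ge0$ with $a+b\ge1$, $c\in\mathbb Z$, $t\ge0$: $F(a,b,c,t)=\sum_{j=0}^{a+b}(-1)^j\binom{a+b}{j}\binom{(t+1)(b-j)+a+c-1}{a+b-1}$, with $\binom00=1$ and $\binom NK=0$ if $K<0$ or $N<K$. *)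

(* Defs.v *)
From Stdlib Require Rdefinitions.
From HB Require Import structures.
From mathcomp Require Import all_boot all_order all_algebra.
From mathcomp Require Import boolp.
From mathcomp Require Import Rstruct.
Set Implicit Arguments. Unset Strict Implicit. Unset Printing Implicit Defensive.
Import Order.TTheory GRing.Theory Num.Theory.

Notation R := Rdefinitions.R.

(* Ground set [n] is modelled by 'I_n = {0,...,n-1} (shift by one; the
   Gale order is invariant under this shift). *)

Definition sorted_elems (n : nat) (T : {set 'I_n}) : seq nat :=
  sort leq [seq val i | i <- enum T].

Definition gale_le (n : nat) (T S : {set 'I_n}) : bool :=
  (#|T| == #|S|) && all2 leq (sorted_elems T) (sorted_elems S).

Definition schubert_bases (n : nat) (S : {set 'I_n}) : {set {set 'I_n}} :=
  [set T : {set 'I_n} | gale_le T S].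

(* x lies in the t-th dilate of conv{ e_B : B in V }:
   x = sum_B lam_B e_B with lam_B >= 0 and sum_B lam_B = t. *)
Definition in_dilated_hull (n : nat) (V : {set {set 'I_n}}) (t : nat)
    (x : 'I_n -> R) : Prop :=
  exists lam : {set 'I_n} -> R,
    [/\ (forall B, (0 <= lam B)%R),
        (\sum_(B in V) lam B)%R = (t%:R)%R
      & forall i, x i = (\sum_(B in V) lam B * (i \in B)%:R)%R].

(* Every point of that dilate has all coordinates in [0,t]
   (each coordinate is a sum of some of the lam_B), so the lattice points
   are exactly the integer vectors with coordinates in {0,...,t} lying in
   the dilate. *)
Definition lattice_count (n : nat) (V : {set {set 'I_n}}) (t : nat) : nat :=
  #|[set x : {ffun 'I_n -> 'I_t.+1} |
       `[< in_dilated_hull V t (fun i => ((x i : nat)%:R : R)%R) >]]|.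

Definition matroid_ehrhart (n : nat) (V : {set {set 'I_n}}) (t : nat) : nat :=
  lattice_count V t.

(* indicator word (0^{r_1}, 1^{r_2}, 0^{r_3}, ...) of S determined by r *)
Definition indicator (r : seq nat) : seq bool :=
  flatten (mkseq (fun k => nseq (nth 0 r k) (odd k)) (size r)).

Definition schubert_set (r : seq nat) : {set 'I_(sumn r)} :=
  [set i : 'I_(sumn r) | nth false (indicator r) i].

Definition i_r (r : seq nat) (t : nat) : nat :=
  matroid_ehrhart (schubert_bases (schubert_set r)) t.

(* generalized binomial: binom(N,K) = 0 if N < K (in particular if N < 0) *)
Definition binz (N : int) (K : nat) : int :=
  match N with
  | Posz m => ('C(m, K))%:Z
  | Negz _ => 0%R
  end.

Definition F (a b : nat) (c : int) (t : nat) : int :=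
  (\sum_(0 <= j < (a + b).+1)
     (-1) ^+ j * ('C(a + b, j))%:Z *
     binz ((t.+1)%:Z * (b%:Z - j%:Z) + a%:Z + c - 1) (a + b).-1)%R.

(* Main.v *)
Require Import Defs.
From mathcomp Require Import all_boot all_order all_algebra.
From mathcomp Require Import boolp Rstruct zify ring.
Set Implicit Arguments. Unset Strict Implicit. Unset Printing Implicit Defensive.
Import Order.TTheory GRing.Theory Num.Theory.

Lemma cnt0 y j s : all (leq y) s -> j <= y -> count (fun v => v < j) s = 0.
Proof.
move=> /allP H hj; apply/eqP; rewrite -leqn0 leqNgt -has_count; apply/hasPn => v /H hv.
by rewrite -leqNgt (leq_trans hj hv).
Qed.

Lemma gale_cnt sT sS : sorted leq sS -> all2 leq sT sS ->
  forall j, count (fun v => v < j) sS <= count (fun v => v < j) sT.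
Proof.
elim: sS sT => [|y sS IH] [|x sT] //= Hs /andP[hxy Ha] j.
case: (ltnP y j) => hyj.
  by rewrite (leq_ltn_trans hxy hyj) !add1n ltnS; apply: IH (path_sorted Hs) Ha j.
by rewrite (cnt0 (order_path_min leq_trans Hs) hyj).
Qed.

Lemma cnt_gale sT sS : sorted leq sT -> sorted leq sS -> size sT = size sS ->
  (forall j, count (fun v => v < j) sS <= count (fun v => v < j) sT) -> all2 leq sT sS.
Proof.
elim: sT sS => [|x sT IH] [|y sS] //= HT HS [] Hsz H.
have hxy : x <= y.
  rewrite leqNgt; apply/negP => hxy; move: (H y.+1).
  by rewrite ltnSn ltnS (leqNgt x y) hxy /= (cnt0 (order_path_min leq_trans HT) hxy).
rewrite hxy /=; apply: IH (path_sorted HT) (path_sorted HS) Hsz _ => j.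
move: (H j); case: (ltnP y j) => hyj.
  by rewrite (leq_ltn_trans hxy hyj) !add1n ltnS.
by rewrite (cnt0 (order_path_min leq_trans HS) hyj).
Qed.

Definition pre n (A : {set 'I_n}) j := \sum_(i < n | i < j) (i \in A : nat).

Lemma cnt_sorted n (A : {set 'I_n}) j :
  count (fun v => v < j) (sorted_elems A) = pre A j.
Proof.
rewrite /sorted_elems count_sort count_map -sum1_count big_enum_cond /pre.
rewrite big_mkcond [RHS]big_mkcond; apply: eq_bigr => i _.
by rewrite /=; case: (_ \in _); case: (_ < _).
Qed.

Lemma size_sorted n (A : {set 'I_n}) : size (sorted_elems A) = #|A|.
Proof. by rewrite size_sort size_map -cardE. Qed.

Lemma gale_pre n (T S : {set 'I_n}) :
  gale_le T S <-> (#|T| = #|S| /\ forall j, pre S j <= pre T j).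
Proof.
rewrite /gale_le; split.
  case/andP => /eqP H1 H2; split=> // j; rewrite -!cnt_sorted.
  by apply: (gale_cnt _ H2); exact: (sort_sorted leq_total).
case=> H1 H2; rewrite H1 eqxx /=.
apply: cnt_gale; try exact: (sort_sorted leq_total).
  by rewrite !size_sorted.
by move=> j; rewrite !cnt_sorted.
Qed.

Lemma sum_lt_step n (F : 'I_n -> nat) j (hj : j < n) :
  \sum_(i < n | i < j.+1) F i = \sum_(i < n | i < j) F i + F (Ordinal hj).
Proof.
rewrite (bigD1 (Ordinal hj)) //= addnC; congr (_ + _); apply: eq_bigl => i.
rewrite ltnS leq_eqVlt -(inj_eq val_inj) /=.
by case: (ltngtP i j).
Qed.

Lemma sum_lt_ge n (F : 'I_n -> nat) j : n <= j ->
  \sum_(i < n | i < j) F i = \sum_(i < n) F i.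
Proof. by move=> h; apply: eq_bigl => i; rewrite (leq_trans (ltn_ord i) h). Qed.

Lemma sum_lt_min n (F : 'I_n -> nat) j :
  \sum_(i < n | i < j) F i = \sum_(i < n | i < minn j n) F i.
Proof. by apply: eq_bigl => i; rewrite leq_min ltn_ord andbT. Qed.

Lemma iota_rcons m k : iota m k.+1 = rcons (iota m k) (m + k).
Proof. by rewrite -addn1 iotaD cats1. Qed.

Lemma count_iota_t t m P : m < t -> count (fun p => p %% t == m) (iota P t) = 1.
Proof.
move=> hm; elim: P => [|P IH].
  rewrite (@eq_in_count _ _ (pred1 m)); last first.
    by move=> p; rewrite mem_iota add0n => /andP[_ hp]; rewrite modn_small.
  by rewrite count_uniq_mem ?iota_uniq // mem_iota hm.
case: t hm IH => // t' hm IH.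
rewrite iota_rcons -cats1 count_cat /= addn0 addSnnS modnDr.
by move: IH => /=; rewrite addnC.
Qed.

Lemma count_le1 t m P y : m < t -> y <= t ->
  count (fun p => p %% t == m) (iota P y) <= 1.
Proof.
move=> hm hy; rewrite -(count_iota_t P hm) -(subnKC hy) iotaD count_cat.
exact: leq_addr.
Qed.

Lemma has_count1 T (a : pred T) s : count a s <= 1 -> (has a s : nat) = count a s.
Proof. by rewrite has_count; case: (count a s) => [|[|]]. Qed.

Lemma sum_count_res t s : 0 < t ->
  \sum_(m < t) count (fun p => p %% t == m) s = size s.
Proof.
move=> ht; elim: s => [|p s IH] /=; first by rewrite big1.
rewrite big_split /= IH.
suff -> : \sum_(i < t) (p %% t == i) = 1 by [].
rewrite (bigD1 (Ordinal (ltn_pmod p ht))) //= eqxx big1 // => m.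
by move/negPf; rewrite -(inj_eq val_inj) /= eq_sym => ->.
Qed.

Lemma count_iota_mul t m k : m < t ->
  count (fun p => p %% t == m) (iota 0 (t * k)) = k.
Proof.
move=> hm; elim: k => [|k IH]; first by rewrite muln0.
by rewrite mulnS addnC iotaD count_cat IH add0n count_iota_t // addn1.
Qed.

Lemma count_iota_mono (q : pred nat) P Q : P <= Q ->
  count q (iota 0 P) <= count q (iota 0 Q).
Proof. by move=> h; rewrite -(subnKC h) iotaD count_cat leq_addr. Qed.

Definition Px n (x : 'I_n -> nat) j := \sum_(i < n | i < j) x i.

Lemma sum_count_Px n (x : 'I_n -> nat) (q : pred nat) j : j <= n ->
  \sum_(i < n | i < j) count q (iota (Px x i) (x i)) = count q (iota 0 (Px x j)).
Proof.
elim: j => [|j IH] hj.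
  by rewrite /Px !big_pred0.
rewrite (sum_lt_step _ hj) IH ?(ltnW hj) //.
by rewrite [in RHS]/Px (sum_lt_step x hj) iotaD count_cat add0n.
Qed.

Definition Bm n t (x : 'I_n -> nat) (m : nat) : {set 'I_n} :=
  [set i : 'I_n | has (fun p => p %% t == m) (iota (Px x i) (x i))].

Lemma card_sum n (A : {set 'I_n}) : #|A| = \sum_(i < n) (i \in A : nat).
Proof.
by rewrite -sum1_card big_mkcond /=; apply: eq_bigr => i _; case: (i \in A).
Qed.

Section Constr.
Variables (n t : nat) (x : 'I_n -> nat) (S : {set 'I_n}).
Hypothesis ht : 0 < t.
Hypothesis hx : forall i, x i <= t.

Lemma inB i m : m < t ->
  ((i \in Bm t x m) : nat) = count (fun p => p %% t == m) (iota (Px x i) (x i)).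
Proof. by move=> hm; rewrite inE has_count1 // count_le1. Qed.

Lemma sumB i : \sum_(m < t) (i \in Bm t x m : nat) = x i.
Proof.
rewrite (eq_bigr _ (fun m _ => inB i (ltn_ord m))).
by rewrite sum_count_res // size_iota.
Qed.

Lemma preB m j : m < t ->
  pre (Bm t x m) j = count (fun p => p %% t == m) (iota 0 (Px x (minn j n))).
Proof.
move=> hm; rewrite /pre sum_lt_min (eq_bigr _ (fun i _ => inB i hm)).
by rewrite sum_count_Px // geq_minr.
Qed.

Hypothesis Hs : \sum_i x i = t * #|S|.
Hypothesis Hp : forall j, t * pre S j <= Px x j.

Lemma Bm_basis m : m < t -> Bm t x m \in schubert_bases S.
Proof.
move=> hm; rewrite inE; apply/gale_pre; split.
  rewrite card_sum -(sum_lt_ge _ (leqnn n)) -/(pre _ n) preB // minnn.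
  by rewrite /Px sum_lt_ge // Hs count_iota_mul.
move=> j; rewrite preB //.
have -> : pre S j = pre S (minn j n) by rewrite /pre sum_lt_min [in RHS]sum_lt_min -minnA minnn.
rewrite -{1}(count_iota_mul (pre S (minn j n)) hm).
exact: count_iota_mono.
Qed.

End Constr.

Lemma hull_iff n (S : {set 'I_n}) t (x : 'I_n -> nat) : 0 < t -> (forall i, x i <= t) ->
  in_dilated_hull (schubert_bases S) t (fun i => ((x i : nat)%:R : R)%R) <->
  (\sum_i x i = t * #|S| /\ forall j, t * pre S j <= Px x j).
Proof.
move=> ht hx; split.
  case=> lam [Hl0 Hsum Hx].
  have HB : forall B, B \in schubert_bases S -> #|B| = #|S| /\ forall j, pre S j <= pre B j.
    by move=> B; rewrite inE => /gale_pre.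
  split.
    have E : ((\sum_i x i)%:R : R)%R = ((t * #|S|)%:R : R)%R.
      rewrite natr_sum (eq_bigr _ (fun i _ => Hx i)) exchange_big /=.
      rewrite (eq_bigr (fun B => lam B * #|S|%:R)%R) => [|B HBV]; last first.
        by rewrite -mulr_sumr -natr_sum -card_sum (HB B HBV).1.
      by rewrite -mulr_suml Hsum natrM.
    by apply/eqP; rewrite -(eqr_nat R) E.
  move=> j.
  rewrite -(ler_nat R) natrM -Hsum mulr_suml /Px [X in (_ <= X)%R]natr_sum.
  rewrite (eq_bigr _ (fun i _ => Hx i)) exchange_big /=.
  apply: ler_sum => B HBV.
  rewrite -mulr_sumr; apply: (ler_wpM2l (Hl0 B)).
  by rewrite -natr_sum ler_nat; exact: (HB B HBV).2.
case=> Hs Hp.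
exists (fun B => ((\sum_(m < t) (B == Bm t x m) : nat)%:R : R)%R); split.
- by move=> B; exact: ler0n.
- rewrite -natr_sum exchange_big /=.
  rewrite (eq_bigr (fun _ => 1%N)) => [|m _]; first by rewrite sum1_card card_ord.
  rewrite (bigD1 (Bm t x m)) ?Bm_basis //= eqxx big1 // => B /andP[_ /negPf ->].
  by [].
- move=> i /=.
  rewrite (eq_bigr (fun B => ((((\sum_(m < t) (B == Bm t x m)) * (i \in B))%N)%:R)%R)) => [|B _];
    last by rewrite natrM.
  rewrite -natr_sum; congr (_%:R)%R.
  rewrite (eq_bigr _ (fun B _ => big_distrl _ _ _)) exchange_big /= -(sumB ht hx i).
  apply: eq_bigr => m _.
  rewrite (bigD1 (Bm t x m)) ?Bm_basis //= eqxx mul1n big1 ?addn0 // => B /andP[_ /negPf ->].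
  by [].
Qed.

Definition vals n t (x : {ffun 'I_n -> 'I_t.+1}) : seq nat := [seq (x i : nat) | i <- enum 'I_n].

Lemma size_vals n t (x : {ffun 'I_n -> 'I_t.+1}) : size (vals x) = n.
Proof. by rewrite size_map size_enum_ord. Qed.

Lemma nth_vals n t (x : {ffun 'I_n -> 'I_t.+1}) (i : 'I_n) : nth 0 (vals x) i = x i.
Proof. by rewrite /vals (nth_map i) ?size_enum_ord // nth_ord_enum. Qed.

Fixpoint allseqs t n : seq (seq nat) :=
  if n is n'.+1 then [seq v :: s | v <- iota 0 t.+1, s <- allseqs t n'] else [:: [::]].

Lemma mem_allseqs t n s : (s \in allseqs t n) = (size s == n) && all (fun v => v < t.+1) s.
Proof.
elim: n s => [|n IH] s; first by case: s.
apply/allpairsP/idP => [[[v s'] [hv hs' ->]]|].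
  rewrite mem_iota in hv; rewrite IH in hs'.
  by move: hv hs'; rewrite /= eqSS => -> /andP[-> ->].
case: s => [|v s] // /andP[hsz /andP[hv hall]].
exists (v, s); split=> //; first by rewrite mem_iota.
by rewrite IH; apply/andP; split; [exact: hsz | exact: hall].
Qed.

Lemma uniq_allseqs t n : uniq (allseqs t n).
Proof.
elim: n => // n IH; apply: allpairs_uniq => //; first exact: iota_uniq.
by move=> [v s] [v' s'] _ _ /= [-> ->].
Qed.

Lemma vals_inj n t : injective (@vals n t).
Proof.
move=> x y H; apply/ffunP => i; apply: val_inj.
by rewrite /= -!nth_vals H.
Qed.

Lemma card_vals n t (P : pred (seq nat)) :
  #|[set x : {ffun 'I_n -> 'I_t.+1} | P (vals x)]| = count P (allseqs t n).
Proof.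
rewrite cardE /enum_mem size_filter (eq_count (a2 := fun x => P (vals x))); last first.
  by move=> x; rewrite /= inE.
rewrite -count_map; apply/permP; apply: uniq_perm.
- by rewrite map_inj_uniq -?enumT ?enum_uniq //; exact: vals_inj.
- exact: uniq_allseqs.
move=> s; rewrite mem_allseqs; apply/mapP/idP => [[x _ ->]|/andP[/eqP hsz hall]].
  rewrite size_vals eqxx /=; apply/allP => v /mapP [i _ ->]; exact: ltn_ord.
have hv : forall i : 'I_n, nth 0 s i < t.+1.
  by move=> i; apply: (allP hall); apply: mem_nth; rewrite hsz.
exists [ffun i : 'I_n => inord (nth 0 s i) : 'I_t.+1]; first by rewrite -enumT mem_enum.
apply: (@eq_from_nth _ 0); first by rewrite size_vals hsz.
move=> i; rewrite hsz => hi.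
by rewrite (nth_vals _ (Ordinal hi)) ffunE inordK // (hv (Ordinal hi)).
Qed.

Lemma sum_take (s : seq nat) j : \sum_(i < size s | i < j) nth 0 s i = sumn (take j s).
Proof.
elim: s j => [|v s IH] j /=; first by rewrite big_ord0.
case: j => [|j]; first by rewrite big_pred0.
rewrite big_mkcond big_ord_recl /= -IH [in RHS]big_mkcond; congr (_ + _).
Qed.

Lemma sum_take' n (s : seq nat) j : size s = n ->
  \sum_(i < n | i < j) nth 0 s i = sumn (take j s).
Proof. by move=> <-; exact: sum_take. Qed.

Definition CondS n (S : {set 'I_n}) t (s : seq nat) :=
  (sumn s == t * #|S|) && all (fun j => t * pre S j <= sumn (take j s)) (iota 0 n.+1).

Lemma lattice_vals n (S : {set 'I_n}) t : 0 < t ->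
  lattice_count (schubert_bases S) t = count (CondS S t) (allseqs t n).
Proof.
move=> ht; rewrite /lattice_count -card_vals; apply: eq_card => x; rewrite !inE.
have hx : forall i, (fun i => (x i : nat)) i <= t by move=> i; rewrite -ltnS ltn_ord.
have HP : forall j, Px (fun i => (x i : nat)) j = sumn (take j (vals x)).
  move=> j; rewrite /Px -(sum_take' j (size_vals x)).
  by apply: eq_bigr => i _; rewrite nth_vals.
rewrite (asbool_equiv_eq (hull_iff S ht hx)) -[RHS]asboolb.
apply: asbool_equiv_eq; rewrite /CondS; split.
  case=> H1 H2; apply/andP; split.
    by rewrite -H1 -(sum_lt_ge _ (leqnn n)) -/(Px _ n) HP take_oversize ?size_vals.
  by apply/allP => j _; rewrite -HP.
case/andP => /eqP H1 /allP H2; split.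
  by rewrite -H1 -(sum_lt_ge _ (leqnn n)) -/(Px _ n) HP take_oversize // size_vals.
move=> j; have := H2 (minn j n); rewrite mem_iota ltnS geq_minr /= => /(_ isT).
by rewrite -HP /Px /pre -!sum_lt_min.
Qed.

Lemma size_indicator r : size (indicator r) = sumn r.
Proof.
rewrite /indicator size_flatten /shape /mkseq -map_comp.
rewrite (@eq_map _ _ _ (nth 0 r)) => [|k]; last by rewrite /= size_nseq.
by rewrite -/(mkseq _ _) mkseq_nth.
Qed.

Lemma pre_schubert r j :
  pre (schubert_set r) j = count id (take j (indicator r)).
Proof.
rewrite /pre -sumn_count map_take -(@sum_take' (sumn r)); last by rewrite size_map size_indicator.
apply: eq_bigr => i _; rewrite inE (nth_map false) // size_indicator; exact: ltn_ord.
Qed.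

Lemma card_schubert r : #|schubert_set r| = count id (indicator r).
Proof.
rewrite card_sum -(sum_lt_ge _ (leqnn (sumn r))) -/(pre _ (sumn r)) pre_schubert.
by rewrite take_oversize // size_indicator.
Qed.

Lemma cnt_false p s j : count id (take j (nseq p false ++ s)) = count id (take (j - p) s).
Proof.
rewrite take_cat size_nseq; case: ltnP => h.
  rewrite take_nseq; last exact: ltnW.
  have -> : j - p = 0 by apply/eqP; rewrite subn_eq0 ltnW.
  by rewrite count_nseq mul0n take0.
by rewrite count_cat count_nseq mul0n.
Qed.

Lemma cnt_true p s j : count id (take j (nseq p true ++ s)) = minn j p + count id (take (j - p) s).
Proof.
rewrite take_cat size_nseq; case: ltnP => h.
  rewrite take_nseq; last exact: ltnW.
  have -> : j - p = 0 by apply/eqP; rewrite subn_eq0 ltnW.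
  by rewrite count_nseq mul1n take0 addn0.
by rewrite count_cat count_nseq mul1n.
Qed.

Lemma cnt_true1 p j : count id (take j (nseq p true)) = minn j p.
Proof.
case: (leqP j p) => h; first by rewrite take_nseq // count_nseq mul1n.
by rewrite take_oversize ?size_nseq ?(ltnW h) // count_nseq mul1n.
Qed.

Lemma indicator4 p q u w :
  indicator [:: p; q; u; w] = nseq p false ++ nseq q true ++ nseq u false ++ nseq w true.
Proof. by rewrite /indicator /= cats0. Qed.

Lemma sumn_le t s : all (fun v => v < t.+1) s -> sumn s <= t * size s.
Proof.
elim: s => //= v s IH /andP[hv hs]; rewrite mulnS.
by apply: leq_add; [rewrite -ltnS | exact: IH].
Qed.

Lemma take_split t s j k : all (fun v => v < t.+1) s -> j <= k ->
  sumn (take j s) <= sumn (take k s) <= sumn (take j s) + t * (k - j).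
Proof.
move=> hs hjk; rewrite -(subnKC hjk) takeD sumn_cat leq_addr /= leq_add2l.
have hall : all (fun v => v < t.+1) (take (k - j) (drop j s)).
  by apply/allP => v /mem_take /mem_drop; exact: (allP hs).
apply: leq_trans (sumn_le hall) _; rewrite leq_mul2l size_take.
by apply/orP; right; rewrite addKn; case: ltnP.
Qed.

Lemma cond4 p q u w t s : s \in allseqs t (sumn [:: p; q; u; w]) ->
  CondS (schubert_set [:: p; q; u; w]) t s =
  (sumn s == t * (q + w)) && (t * q <= sumn (take (p + q) s)).
Proof.
rewrite mem_allseqs => /andP[/eqP hsz hall].
have hn : sumn [:: p; q; u; w] = p + q + u + w by rewrite /=; lia.
have hc : #|schubert_set [:: p; q; u; w]| = q + w.
  rewrite card_schubert indicator4 !count_cat !count_nseq /=; lia.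
have hpre : forall j, pre (schubert_set [:: p; q; u; w]) j =
    minn (j - p) q + minn (j - p - q - u) w.
  by move=> j; rewrite pre_schubert indicator4 cnt_false cnt_true cnt_false cnt_true1.
have hfn : sumn (take (p + q + u + w) s) = sumn s by rewrite take_oversize // hsz hn.
rewrite /CondS hc.
apply/andP/andP => [[/eqP Hs /allP Ha]|[/eqP Hs Hb]].
  split; first by rewrite Hs.
  have H := Ha (p + q); rewrite hpre in H.
  have E : minn (p + q - p) q + minn (p + q - p - q - u) w = q by lia.
  rewrite E in H; apply: H; rewrite mem_iota hn; lia.
split; first by rewrite Hs.
apply/allP => j; rewrite mem_iota add0n ltnS => /andP[_ hj]; rewrite hpre; rewrite hn in hj.
case: (leqP j (p + q)) => h1.
  have /andP[_ H] := take_split hall h1.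
  have -> : minn (j - p - q - u) w = 0 by lia.
  rewrite addn0.
  case: (leqP j p) => h0.
    by rewrite (_ : minn (j - p) q = 0) ?muln0 //; lia.
  have E : t * minn (j - p) q + t * (p + q - j) <= t * q.
    by rewrite -mulnDr leq_mul2l; apply/orP; right; lia.
  move: E H Hb; generalize (t * minn (j - p) q) (t * (p + q - j)) (t * q).
  move=> X Y Z E H' Hb'; rewrite -(leq_add2r Y); exact: leq_trans E (leq_trans Hb' H').
case: (leqP j (p + q + u)) => h2.
  have /andP[H _] := take_split hall (ltnW h1).
  have -> : minn (j - p - q - u) w = 0 by lia.
  have -> : minn (j - p) q = q by lia.
  by rewrite addn0; apply: leq_trans Hb H.
have /andP[_ H] := take_split hall hj.
rewrite hfn Hs in H.
have -> : minn (j - p - q - u) w = j - p - q - u by lia.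
have -> : minn (j - p) q = q by lia.
have E : t * (q + (j - p - q - u)) + t * (p + q + u + w - j) = t * (q + w).
  by rewrite -mulnDr; congr (t * _); lia.
move: E H; generalize (t * (q + (j - p - q - u))) (t * (p + q + u + w - j)) (t * (q + w)).
move=> X Y Z E H'; by rewrite -(leq_add2r Y) E.
Qed.

Lemma count_big T (P : pred T) l : count P l = \sum_(s <- l) (P s : nat).
Proof. by elim: l => [|x l IH]; rewrite ?big_nil ?big_cons //= IH. Qed.

Lemma allseqsS t n : allseqs t n.+1 = [seq v :: s | v <- iota 0 t.+1, s <- allseqs t n].
Proof. by []. Qed.

Lemma count_allseqsS t n (P : pred (seq nat)) :
  count P (allseqs t n.+1) = \sum_(v < t.+1) count (fun s : seq nat => P ((v : nat) :: s)) (allseqs t n).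
Proof.
rewrite allseqsS count_big big_allpairs_dep.
transitivity (\sum_(0 <= v < t.+1) \sum_(s <- allseqs t n) (P (v :: s) : nat)).
  by rewrite /index_iota subn0.
by rewrite big_mkord; apply: eq_bigr => v _; rewrite count_big.
Qed.

Definition comp t (s : seq nat) := map (fun v => t - v) s.

Lemma count_comp t n (P : pred (seq nat)) :
  count (fun s => P (comp t s)) (allseqs t n) = count P (allseqs t n).
Proof.
elim: n P => [|n IH] P; first by [].
rewrite !count_allseqsS.
rewrite (eq_bigr (fun v : 'I_t.+1 => count (fun s => P ((t - (v : nat)) :: s)) (allseqs t n))) => [|v _];
  last by rewrite -(IH (fun s => P ((t - v) :: s))).
rewrite (reindex_inj rev_ord_inj) /=; apply: eq_bigr => v _.
by rewrite subSS subKn // -ltnS.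
Qed.

Definition W t m N := count (fun s => sumn s == N) (allseqs t m).

Lemma eq_addl v x M : (v + x == M) = (v <= M) && (x == M - v).
Proof.
apply/idP/idP => [/eqP <-|/andP[h /eqP ->]]; first by rewrite leq_addr addKn eqxx.
by rewrite subnKC.
Qed.

Lemma count_andl T b (P : pred T) l : count (fun s => b && P s) l = b * count P l.
Proof.
case: b; first by rewrite mul1n.
by rewrite mul0n (eq_count (a2 := pred0)) ?count_pred0.
Qed.

Lemma W0 t N : W t 0 N = (N == 0).
Proof. by rewrite /W /= addn0 eq_sym. Qed.

Lemma WS t m N : W t m.+1 N = \sum_(v < t.+1) (v <= N) * W t m (N - v).
Proof.
rewrite /W count_allseqsS; apply: eq_bigr => v _.
by rewrite -count_andl; apply: eq_count => s /=; rewrite eq_addl.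
Qed.

Lemma split_count t p q M K :
  count (fun s => (sumn (take p s) == M) && (sumn (drop p s) == K)) (allseqs t (p + q)) =
  W t p M * W t q K.
Proof.
elim: p M => [|p IH] M.
  rewrite add0n W0 (eq_count (a2 := fun s => (0 == M) && (sumn s == K))) => [|s];
    last by rewrite take0 drop0.
  by rewrite count_andl eq_sym.
rewrite addSn count_allseqsS WS big_distrl /=; apply: eq_bigr => v _.
rewrite (eq_count (a2 := fun s => (v <= M) &&
   ((sumn (take p s) == M - v) && (sumn (drop p s) == K)))) => [|s /=];
  last by rewrite eq_addl andbA.
by rewrite count_andl IH mulnA.
Qed.

Lemma count_add4 T (a b c d : pred T) l : (forall s, a s + b s = c s + d s) ->
  count a l + count b l = count c l + count d l.
Proof.
move=> H; rewrite !count_big -!big_split /=; apply: eq_bigr => s _; exact: H.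
Qed.

Lemma ptwise x y M K :
  ((x + y == M + K) && (M <= x)) + ((x + y == M + K) && (x <= M)) =
  (x + y == M + K) + ((x == M) && (y == K)).
Proof.
case: (ltngtP x M) => h /=.
- case: eqP => E /=; last by [].
  by move: E h; lia.
- case: eqP => E /=; last by [].
  by move: E h; lia.
- by rewrite h eqn_add2l andbT addnn; case: (y == K).
Qed.

Section IntPart.
Local Open Scope ring_scope.

Lemma binz_lt (N : int) K : N < K%:Z -> binz N K = 0.
Proof. by case: N => // k; rewrite ltz_nat => h /=; rewrite bin_small. Qed.

Lemma binz_pascal (M : int) K : binz (M + 1) K.+1 = binz M K.+1 + binz M K.
Proof.
case: (ltrP M 0) => hM.
  by rewrite !binz_lt ?addr0 //; lia.
case: M hM => [k|k] // _.
by rewrite -PoszD addn1 /= binS PoszD.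
Qed.

Lemma hockey (M : int) K t :
  \sum_(v < t.+1) binz (M - v%:Z) K = binz (M + 1) K.+1 - binz (M - t%:Z) K.+1.
Proof.
elim: t => [|t IH].
  by rewrite big_ord1 /= subr0 binz_pascal; lia.
rewrite big_ord_recr /= IH.
have := binz_pascal (M - t.+1%:Z) K.
have -> : M - t.+1%:Z + 1 = M - t%:Z by lia.
lia.
Qed.

End IntPart.

Section IntPart2.
Local Open Scope ring_scope.

Definition Az t m (N : int) : int :=
  \sum_(0 <= j < m.+1) (-1) ^+ j * ('C(m, j))%:Z *
     binz (N + m%:Z - 1 - (t.+1 * j)%N%:Z) m.-1.

Lemma binom_shift m (T : nat -> int) :
  \sum_(j < m.+2) ('C(m.+1, j))%:Z * T j =
  \sum_(j < m.+1) ('C(m, j))%:Z * T j + \sum_(j < m.+1) ('C(m, j))%:Z * T j.+1.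
Proof.
rewrite big_ord_recl /= bin0.
rewrite (eq_bigr (fun j : 'I_m.+1 => ('C(m, j.+1))%:Z * T j.+1 + ('C(m, j))%:Z * T j.+1))
  => [|j _]; last by rewrite /bump leq0n add1n binS PoszD mulrDl.
rewrite big_split /= addrA; congr (_ + _).
rewrite [in RHS]big_ord_recl /= bin0; congr (_ + _).
rewrite big_ord_recr /= bin_small // mul0r addr0.
by apply: eq_bigr => j _; rewrite /bump leq0n add1n.
Qed.

Lemma Az_neg t m (N : int) : N < 0 -> Az t m.+1 N = 0.
Proof.
move=> hN; rewrite /Az big1 // => j _.
rewrite binz_lt ?mulr0 //=; lia.
Qed.

Lemma Az_rec t m (N : int) :
  Az t m.+2 N = \sum_(v < t.+1) Az t m.+1 (N - v%:Z).
Proof.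
pose T j := (-1) ^+ j * binz (N + m.+1%:Z - (t.+1 * j)%N%:Z) m.+1.
transitivity (\sum_(j < m.+3) ('C(m.+2, j))%:Z * T j).
  rewrite /Az big_mkord; apply: eq_bigr => j _; rewrite /T -mulrA mulrCA.
  by congr (_ * (_ * binz _ _)); lia.
rewrite binom_shift /Az.
rewrite exchange_big /= big_mkord -big_split /=; apply: eq_bigr => j _.
rewrite -mulr_sumr.
rewrite (eq_bigr (fun v : 'I_t.+1 => binz ((N + m.+1%:Z - 1 - (t.+1 * j)%N%:Z) - (v : nat)%:Z) m))
  => [|v _]; last by congr binz; lia.
rewrite hockey /T /= exprS.
have -> : N + m.+1%:Z - 1 - (t.+1 * j)%N%:Z + 1 = N + m.+1%:Z - (t.+1 * j)%N%:Z by lia.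
have -> : N + m.+1%:Z - 1 - (t.+1 * j)%N%:Z - t%:Z = N + m.+1%:Z - (t.+1 * j.+1)%N%:Z.
  rewrite mulnS; lia.
rewrite mulrBr; ring.
Qed.

End IntPart2.

Lemma W1 t N : W t 1 N = (N <= t).
Proof.
rewrite WS; under eq_bigr => v _ do rewrite W0.
case: (leqP N t) => h.
  rewrite (bigD1 (Ordinal (h : N < t.+1))) //= leqnn subnn big1 // => v /=.
  rewrite -(inj_eq val_inj) /= => /negPf hv.
  case: (leqP v N) => h1; last by rewrite mul0n.
  by rewrite mul1n subn_eq0 leqNgt ltn_neqAle hv h1.
rewrite big1 // => v _.
by rewrite subn_eq0 (leqNgt N v) (leq_ltn_trans (ltnSE (ltn_ord v)) h) muln0.
Qed.

Section IntPart3.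
Local Open Scope ring_scope.

Lemma Az_W t m N : Az t m.+1 (N%:Z) = (W t m.+1 N)%:Z.
Proof.
elim: m N => [|m IH] N.
  rewrite W1 /Az big_mkord !big_ord_recl big_ord0 /= addr0 !expr0 !expr1 !mul1r.
  rewrite /bump /= binn mulr1.
  have -> : N%:Z + 1 - 1 - (t.+1 * 0)%N%:Z = N%:Z by rewrite muln0; lia.
  have -> : N%:Z + 1 - 1 - (t.+1 * 1)%N%:Z = N%:Z - t.+1%:Z by rewrite muln1; lia.
  case: (leqP N t) => h.
    by rewrite (binz_lt (N := N%:Z - t.+1%:Z)) /=; [rewrite bin0 mulr0 addr0 | lia].
  have -> : N%:Z - t.+1%:Z = (N - t.+1)%N%:Z by rewrite subzn.
  by rewrite /= !bin0 mulN1r subrr.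
rewrite Az_rec WS -[in RHS]natz natr_sum; apply: eq_bigr => v _.
case: (leqP v N) => h.
  by rewrite subzn // IH mul1n natz.
by rewrite Az_neg ?mul0n //; lia.
Qed.

End IntPart3.

Section FPart.
Local Open Scope ring_scope.
Lemma F_Az (a b t : nat) : F a b 0 t = Az t (a + b) (t * b)%N%:Z.
Proof.
rewrite /F /Az; apply: eq_bigr => j _; congr (_ * binz _ _).
rewrite !PoszM !PoszD !intS; ring.
Qed.

Lemma F_W (a b t : nat) : (0 < a)%N -> F a b 0 t = (W t (a + b) (t * b))%:Z.
Proof.
move=> ha; rewrite F_Az.
have hm : (a + b = (a + b).-1.+1)%N by rewrite prednK // addn_gt0 ha.
by rewrite hm Az_W.
Qed.
End FPart.

Lemma sumn_comp t s : all (fun v => v < t.+1) s -> sumn (comp t s) + sumn s = t * size s.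
Proof.
elim: s => [|v s IH] /=; first by rewrite muln0.
move=> /andP[hv hs]; rewrite mulnS -(IH hs).
move: hv; rewrite ltnS => hv.
rewrite addnACA subnK //.
Qed.

Lemma sumn_split p s : sumn s = sumn (take p s) + sumn (drop p s).
Proof. by rewrite -sumn_cat cat_take_drop. Qed.

Theorem main_count (a b c d t : nat) : 0 < t ->
  i_r [:: a; b; c; d] t + i_r [:: b; a; d; c] t =
  W t (a + b + (c + d)) (t * (b + d)) + W t (a + b) (t * b) * W t (c + d) (t * d).
Proof.
move=> ht.
rewrite /i_r /matroid_ehrhart !lattice_vals //.
rewrite (eq_in_count (@cond4 a b c d t)) (eq_in_count (@cond4 b a d c t)).
have e1 : sumn [:: a; b; c; d] = a + b + (c + d) by rewrite /=; lia.
have e2 : sumn [:: b; a; d; c] = a + b + (c + d) by rewrite /=; lia.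
rewrite e1 e2.
set n := a + b + (c + d).
rewrite -(@count_comp t n (fun s => (sumn s == t * (a + c)) && (t * a <= sumn (take (b + a) s)))).
rewrite (@eq_in_count _ (fun s => (fun s => (sumn s == t * (a + c)) && (t * a <= sumn (take (b + a) s))) (comp t s)) (fun s => (sumn s == t * (b + d)) && (sumn (take (a + b) s) <= t * b))
   (allseqs t n)); last first.
  move=> s; rewrite mem_allseqs => /andP[/eqP hsz hall] /=.
  have E1 := sumn_comp hall.
  have hall' : all (fun v => v < t.+1) (take (b + a) s).
    by apply/allP => v /mem_take; exact: (allP hall).
  have E2 := sumn_comp hall'.
  rewrite /comp -map_take -/(comp t (take (b + a) s)) -/(comp t s).
  rewrite size_take hsz in E2.
  have hba : b + a < n \/ b + a = n by rewrite /n; lia.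
  have E2' : sumn (comp t (take (b + a) s)) + sumn (take (b + a) s) = t * (b + a).
    by case: hba => h; [rewrite E2 h | rewrite E2 h ltnn].
  rewrite hsz in E1; rewrite addnC in E2'.
  rewrite /n !mulnDr in E1; rewrite !mulnDr in E2' *.
  move: E1 E2'; rewrite (addnC b a).
  set X := sumn (comp t s); set X' := sumn s.
  set Y := sumn (comp t (take (a + b) s)); set Y' := sumn (take (a + b) s).
  clearbody X X' Y Y' => H1 H2.
  apply/idP/idP => /andP[/eqP h1 h2]; apply/andP; split; try apply/eqP; lia.
rewrite (@count_add4 _ _ _ (fun s => sumn s == t * (b + d))
   (fun s => (sumn (take (a + b) s) == t * b) && (sumn (drop (a + b) s) == t * d))); last first.
  move=> s /=; rewrite (sumn_split (a + b) s) mulnDr; exact: ptwise.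
by rewrite split_count.
Qed.

Theorem theorem4p2 (a b c d t : nat) :
  (0 < a)%N -> (0 < b)%N -> (0 < c)%N -> (0 < d)%N -> (0 < t)%N ->
  ((i_r [:: a; b; c; d] t + i_r [:: b; a; d; c] t)%:Z =
   F (a + c) (b + d) 0 t + F a b 0 t * F c d 0 t)%R.
Proof.
move=> ha hb hc hd ht.
rewrite main_count // !F_W ?addn_gt0 ?ha ?hc //.
rewrite PoszD PoszM; congr (_ + _)%R.
by rewrite (_ : (a + c + (b + d) = a + b + (c + d))%N) //; lia.
Qed.
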